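(* Let $\mathcal{C}$ be a symmetric monoidal category with discarding and zero morphisms which satisfies normalisation. Then (i) if $\psi$ is a non-zero pure state, its normalisation is pure; and (ii) if $\psi$ and $\phi$ are pure states, then $\psi\otimes\phi$ is pure.
   Context: $\mathcal{C}$ is symmetric monoidal with unit $I$; unitors are suppressed. States are morphisms $I\to A$, scalars are morphisms $I\to I$. Discarding: effects $\top_A\colon A\to I$ with $\top_{A\otimes B}=\top_A\otimes\top_B$ and $\top_I=1_I$. A morphism $f\colon A\to B$ is causal if $\top_B\circ f=\top_A$; a state $\rho$ is causal if $\top\circ\rho=1_I$. Zero morphisms: for all objects $A,B$ a morphism $0\colon A\to B$ such that composing (via $\circ$) or tensoring (via $\otimes$) $0$ with any morphism yields $0$. Normalisation: every non-zero state $\rho$ can be written as $\rho=\sigma\otimes r$ for a scalar $r$ and a unique causal state $\sigma$, called the normalisation of $\rho$. A state $\sigma$ of $B\otimes C$ is a dilation of a morphism/state $f$ of $B$ if $(1_B\otimes\top_C)\circ\sigma=f$. A morphism $f\colon A\to B$ is pure if either $f=0$ or: whenever $g\colon A\to B\otimes C$ satisfies $(1_B\otimes\top_C)\circ g=f$, then $g=f\otimes\rho$ for some causal state $\rho$ of $C$. *)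

(* Defs.v *)
Set Implicit Arguments.
Unset Strict Implicit.

Record SMC := {
  Ob :> Type;
  Hom : Ob -> Ob -> Type;
  comp : forall {A B C : Ob}, Hom B C -> Hom A B -> Hom A C;
  idm : forall (A : Ob), Hom A A;
  comp_assoc : forall A B C D (h : Hom C D) (g : Hom B C) (f : Hom A B),
      comp h (comp g f) = comp (comp h g) f;
  comp_id_l : forall A B (f : Hom A B), comp (idm B) f = f;
  comp_id_r : forall A B (f : Hom A B), comp f (idm A) = f;

  I : Ob;
  ten : Ob -> Ob -> Ob;
  tenm : forall {A B C D : Ob}, Hom A B -> Hom C D -> Hom (ten A C) (ten B D);
  tenm_id : forall A B, tenm (idm A) (idm B) = idm (ten A B);
  tenm_comp : forall A B C A' B' C' (g : Hom B C) (f : Hom A B)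
                (g' : Hom B' C') (f' : Hom A' B'),
      tenm (comp g f) (comp g' f') = comp (tenm g g') (tenm f f');

  assoc : forall A B C, Hom (ten (ten A B) C) (ten A (ten B C));
  associnv : forall A B C, Hom (ten A (ten B C)) (ten (ten A B) C);
  assoc_inv1 : forall A B C, comp (associnv A B C) (assoc A B C) = idm _;
  assoc_inv2 : forall A B C, comp (assoc A B C) (associnv A B C) = idm _;
  assoc_nat : forall A B C A' B' C' (f : Hom A A') (g : Hom B B') (h : Hom C C'),
      comp (assoc A' B' C') (tenm (tenm f g) h)
      = comp (tenm f (tenm g h)) (assoc A B C);

  lunit : forall A, Hom (ten I A) A;
  lunitinv : forall A, Hom A (ten I A);
  lunit_inv1 : forall A, comp (lunitinv A) (lunit A) = idm _;
  lunit_inv2 : forall A, comp (lunit A) (lunitinv A) = idm _;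
  lunit_nat : forall A B (f : Hom A B),
      comp (lunit B) (tenm (idm I) f) = comp f (lunit A);

  runit : forall A, Hom (ten A I) A;
  runitinv : forall A, Hom A (ten A I);
  runit_inv1 : forall A, comp (runitinv A) (runit A) = idm _;
  runit_inv2 : forall A, comp (runit A) (runitinv A) = idm _;
  runit_nat : forall A B (f : Hom A B),
      comp (runit B) (tenm f (idm I)) = comp f (runit A);

  braid : forall A B, Hom (ten A B) (ten B A);
  braid_invol : forall A B, comp (braid B A) (braid A B) = idm _;
  braid_nat : forall A B A' B' (f : Hom A A') (g : Hom B B'),
      comp (braid A' B') (tenm f g) = comp (tenm g f) (braid A B);

  pentagon : forall A B C D,
      comp (assoc A B (ten C D)) (assoc (ten A B) C D)
      = comp (tenm (idm A) (assoc B C D))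
             (comp (assoc A (ten B C) D) (tenm (assoc A B C) (idm D)));
  triangle : forall A B,
      comp (tenm (idm A) (lunit B)) (assoc A I B) = tenm (runit A) (idm B);
  hexagon : forall A B C,
      comp (assoc B C A) (comp (braid A (ten B C)) (assoc A B C))
      = comp (tenm (idm B) (braid A C))
             (comp (assoc B A C) (tenm (braid A B) (idm C)))
}.

Arguments Hom {s}.
Arguments comp {s A B C}.
Arguments idm {s}.
Arguments I {s}.
Arguments ten {s}.
Arguments tenm {s A B C D}.
Arguments assoc {s}.
Arguments associnv {s}.
Arguments lunit {s}.
Arguments lunitinv {s}.
Arguments runit {s}.
Arguments runitinv {s}.
Arguments braid {s}.

Record SMCDZ := {
  smc :> SMC;
  disc : forall (A : smc), Hom A I;
  disc_ten : forall (A B : smc),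
      disc (ten A B) = comp (lunit I) (tenm (disc A) (disc B));
  disc_I : disc I = idm I;
  zero : forall (A B : smc), Hom A B;
  zero_comp_l : forall (A B C : smc) (g : Hom B C), comp g (zero A B) = zero A C;
  zero_comp_r : forall (A B C : smc) (f : Hom A B), comp (zero B C) f = zero A C;
  zero_ten_l : forall (A B C D : smc) (f : Hom C D),
      tenm (zero A B) f = zero (ten A C) (ten B D);
  zero_ten_r : forall (A B C D : smc) (f : Hom A B),
      tenm f (zero C D) = zero (ten A C) (ten B D)
}.

Arguments disc {s}.
Arguments zero {s}.

Section Notions.
Variable C : SMCDZ.

Definition state (A : C) := @Hom C I A.
Definition scalar := @Hom C I I.

Definition causal {A B : C} (f : Hom A B) : Prop := comp (disc B) f = disc A.
Definition causal_state {A : C} (rho : state A) : Prop :=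
  comp (disc A) rho = idm I.

(** Tensor of two states, as a state of A (x) B (unitor I ~ I (x) I inserted). *)
Definition state_ten {A B : C} (s : state A) (t : state B) : state (ten A B) :=
  comp (tenm s t) (lunitinv I).

Definition state_scale {A : C} (s : state A) (r : scalar) : state A :=
  comp (runit A) (state_ten s r).

Definition normalisation : Prop :=
  forall (A : C) (rho : state A), rho <> zero I A ->
    exists sigma : state A,
      causal_state sigma /\ (exists r : scalar, rho = state_scale sigma r) /\
      (forall (sigma' : state A) (r' : scalar),
          causal_state sigma' -> rho = state_scale sigma' r' -> sigma' = sigma).

Definition is_normalisation {A : C} (rho sigma : state A) : Prop :=
  causal_state sigma /\ exists r : scalar, rho = state_scale sigma r.

Definition marginal {A B E : C} (g : Hom A (ten B E)) : Hom A B :=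
  comp (runit B) (comp (tenm (idm B) (disc E)) g).

Definition tensor_with_state {A B E : C} (f : Hom A B) (rho : state E)
  : Hom A (ten B E) :=
  comp (tenm f rho) (runitinv A).

Definition pure {A B : C} (f : Hom A B) : Prop :=
  f = zero A B \/
  forall (E : C) (g : Hom A (ten B E)),
    marginal g = f ->
    exists rho : state E, causal_state rho /\ g = tensor_with_state f rho.

End Notions.

(* Main.v *)
Require Import Defs.
From Stdlib Require Import Classical.

Ltac ra := repeat rewrite <- comp_assoc.

Lemma split_ten (S : SMC) (A B C D : S) (f : Hom A B) (g : Hom C D) :
  tenm f g = comp (tenm f (idm D)) (tenm (idm A) g).
Proof. rewrite <- tenm_comp, comp_id_l, comp_id_r. reflexivity. Qed.

Lemma split_ten' (S : SMC) (A B C D : S) (f : Hom A B) (g : Hom C D) :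
  tenm f g = comp (tenm (idm B) g) (tenm f (idm C)).
Proof. rewrite <- tenm_comp, comp_id_l, comp_id_r. reflexivity. Qed.

Lemma ten1_r (S : SMC) (A B : S) (f : Hom A B) :
  tenm f (idm I) = comp (runitinv B) (comp f (runit A)).
Proof.
  rewrite <- runit_nat. rewrite comp_assoc, runit_inv1, comp_id_l. reflexivity.
Qed.

Lemma ten1_l (S : SMC) (A B : S) (f : Hom A B) :
  tenm (idm I) f = comp (lunitinv B) (comp f (lunit A)).
Proof.
  rewrite <- lunit_nat. rewrite comp_assoc, lunit_inv1, comp_id_l. reflexivity.
Qed.

Lemma runitinv_nat (S : SMC) (A B : S) (f : Hom A B) :
  comp (runitinv B) f = comp (tenm f (idm I)) (runitinv A).
Proof. rewrite ten1_r. ra. rewrite runit_inv2, comp_id_r. reflexivity. Qed.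

Lemma lunitinv_nat (S : SMC) (A B : S) (f : Hom A B) :
  comp (lunitinv B) f = comp (tenm (idm I) f) (lunitinv A).
Proof. rewrite ten1_l. ra. rewrite lunit_inv2, comp_id_r. reflexivity. Qed.

Lemma canc_runit_ten (S : SMC) (A B : S) (f g : Hom A B) :
  tenm f (idm I) = tenm g (idm I) -> f = g.
Proof.
  intro H. rewrite !ten1_r in H.
  assert (H2 : comp (runit B) (comp (comp (runitinv B) (comp f (runit A))) (runitinv A))
             = comp (runit B) (comp (comp (runitinv B) (comp g (runit A))) (runitinv A)))
    by (rewrite H; reflexivity).
  ra. revert H2. ra. rewrite !runit_inv2, !comp_assoc, !runit_inv2, !comp_id_l, !comp_id_r.
  auto.
Qed.

Lemma canc_lunit_ten (S : SMC) (A B : S) (f g : Hom A B) :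
  tenm (idm I) f = tenm (idm I) g -> f = g.
Proof.
  intro H. rewrite !ten1_l in H.
  assert (H2 : comp (lunit B) (comp (comp (lunitinv B) (comp f (lunit A))) (lunitinv A))
             = comp (lunit B) (comp (comp (lunitinv B) (comp g (lunit A))) (lunitinv A)))
    by (rewrite H; reflexivity).
  revert H2. ra. rewrite !lunit_inv2, !comp_assoc, !lunit_inv2, !comp_id_l, !comp_id_r.
  auto.
Qed.

Lemma canc_assoc (S : SMC) (A B C X : S) (f g : Hom X (ten (ten A B) C)) :
  comp (assoc A B C) f = comp (assoc A B C) g -> f = g.
Proof.
  intro H. rewrite <- (comp_id_l f), <- (comp_id_l g), <- (assoc_inv1 A B C).
  rewrite <- !comp_assoc, H. reflexivity.
Qed.

Lemma K1 (S : SMC) (A B : S) :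
  runit (ten A B) = comp (tenm (idm A) (runit B)) (assoc A B I).
Proof.
  apply canc_runit_ten. apply (canc_assoc S A B I).
  rewrite <- triangle.
  rewrite comp_assoc.
  rewrite <- (tenm_id A B).
  rewrite assoc_nat. rewrite <- comp_assoc. rewrite pentagon.
  rewrite !comp_assoc. rewrite <- tenm_comp. rewrite comp_id_l.
  rewrite triangle.
  rewrite <- (assoc_nat (idm A) (runit B) (idm I)).
  rewrite <- comp_assoc. rewrite <- tenm_comp. rewrite comp_id_l. reflexivity.
Qed.

Lemma K2 (S : SMC) : lunit (@I S) = runit I.
Proof.
  apply canc_lunit_ten.
  assert (E1 : tenm (runit (@I S)) (idm I) = runit (ten I I)).
  { assert (H := runit_nat (runit (@I S))).
    rewrite <- (comp_id_l (tenm _ _)), <- (runit_inv1 I), <- comp_assoc, H.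
    rewrite comp_assoc, runit_inv1, comp_id_l. reflexivity. }
  rewrite <- (comp_id_r (tenm (idm I) (lunit I))).
  rewrite <- (assoc_inv2 I I I). rewrite comp_assoc, triangle, E1, K1.
  rewrite <- comp_assoc, assoc_inv2, comp_id_r. reflexivity.
Qed.

Lemma K2inv (S : SMC) : lunitinv (@I S) = runitinv I.
Proof.
  rewrite <- (comp_id_l (lunitinv I)), <- (runit_inv1 I), <- K2, <- comp_assoc,
    lunit_inv2, comp_id_r. reflexivity.
Qed.

Lemma scale_comp (C : SMCDZ) (A : C) (s : state A) (r : scalar C) :
  state_scale s r = comp s r.
Proof.
  unfold state_scale, state_ten. rewrite split_ten. ra.
  rewrite comp_assoc, runit_nat. rewrite <- K2. ra. rewrite (comp_assoc (lunit I)).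
  rewrite lunit_nat. ra. rewrite lunit_inv2, comp_id_r. reflexivity.
Qed.

Lemma tws_scale (C : SMCDZ) (B E : C) (f : state B) (rho : state E) (r : scalar C) :
  tensor_with_state (comp f r) rho = comp (tensor_with_state f rho) r.
Proof.
  unfold tensor_with_state.
  rewrite <- (comp_id_r rho) at 1. rewrite tenm_comp. ra.
  rewrite <- runitinv_nat. reflexivity.
Qed.

Lemma marg_tws (C : SMCDZ) (A B E : C) (f : Hom A B) (rho : state E) :
  causal_state rho -> marginal (tensor_with_state f rho) = f.
Proof.
  intro H. unfold marginal, tensor_with_state. rewrite (comp_assoc (tenm _ _)).
  rewrite <- tenm_comp, comp_id_l. unfold causal_state in H. rewrite H.
  rewrite comp_assoc, runit_nat. ra. rewrite runit_inv2, comp_id_r. reflexivity.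
Qed.

Lemma disc_marg (C : SMCDZ) (X B E : C) (g : Hom X (ten B E)) :
  comp (disc (ten B E)) g = comp (disc B) (marginal g).
Proof.
  unfold marginal. rewrite disc_ten. ra. rewrite (comp_assoc (disc B)).
  rewrite <- runit_nat, <- K2.
  ra. rewrite (comp_assoc (tenm _ _) (tenm _ _)). rewrite <- tenm_comp, comp_id_l, comp_id_r.
  reflexivity.
Qed.

Lemma marg_comp (C : SMCDZ) (X Y B E : C) (g : Hom Y (ten B E)) (h : Hom X Y) :
  marginal (comp g h) = comp (marginal g) h.
Proof. unfold marginal. ra. reflexivity. Qed.

Lemma marg_zero (C : SMCDZ) (X B E : C) : marginal (zero X (ten B E)) = zero X B.
Proof. unfold marginal. rewrite !zero_comp_l. reflexivity. Qed.

Lemma zero_states (C : SMCDZ) (A : C) (s : state A) :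
  @idm C I = zero I I -> s = zero I A.
Proof. intro H. rewrite <- (comp_id_r s), H, zero_comp_l. reflexivity. Qed.

Lemma part_i (C : SMCDZ) (Hnorm : normalisation C) (A : C) (psi sigma : state A) :
  psi <> zero I A -> pure psi -> is_normalisation psi sigma -> pure sigma.
Proof.
  intros Hnz Hpure [Hcs [r Hr]]. rewrite scale_comp in Hr. right. intros E g Hg.
  destruct Hpure as [H0|Hp]; [contradiction|].
  destruct (Hp E (comp g r)) as [rho [Hrho Heq]].
  { rewrite marg_comp, Hg; auto. }
  exists rho; split; auto.
  assert (Hnz' : comp g r <> zero I (ten A E)).
  { intro H. apply Hnz. rewrite Hr, <- Hg, <- marg_comp, H, marg_zero. reflexivity. }
  destruct (Hnorm _ (comp g r) Hnz') as [s0 [_ [_ U]]].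
  assert (Hcg : causal_state g).
  { unfold causal_state. rewrite disc_marg, Hg. exact Hcs. }
  assert (Hch : causal_state (tensor_with_state sigma rho)).
  { unfold causal_state. rewrite disc_marg, marg_tws by exact Hrho. exact Hcs. }
  rewrite (U g r Hcg) by (rewrite scale_comp; reflexivity).
  symmetry. apply (U _ r Hch). rewrite scale_comp, <- tws_scale, <- Hr. exact Heq.
Qed.

Lemma part_P (C : SMCDZ) (Hnorm : normalisation C) (X : C) (chi : state X) (t : scalar C) :
  causal_state chi -> pure chi -> comp chi t <> zero I X -> pure (comp chi t).
Proof.
  intros Hc Hp Hnz. right. intros E g Hg.
  assert (Hgz : g <> zero I (ten X E)).
  { intro H. apply Hnz. rewrite <- Hg, H, marg_zero. reflexivity. }
  destruct (Hnorm _ g Hgz) as [s0 [Hs0 [[u Hu] _]]]. rewrite scale_comp in Hu.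
  assert (Hms : causal_state (marginal s0)).
  { unfold causal_state. rewrite <- disc_marg. exact Hs0. }
  destruct (Hnorm _ (comp chi t) Hnz) as [s1 [_ [_ U1]]].
  assert (E1 : marginal s0 = chi).
  { rewrite (U1 _ u Hms), (U1 _ t Hc); auto; rewrite scale_comp; auto.
    rewrite <- Hg, Hu, marg_comp. reflexivity. }
  destruct Hp as [H0|Hp].
  { exfalso. apply Hnz. rewrite H0, zero_comp_r. reflexivity. }
  destruct (Hp E s0 E1) as [rho [Hrho Hs]].
  exists rho. split; auto.
  assert (Eu : u = t).
  { transitivity (comp (disc _) g).
    - rewrite Hu, comp_assoc. unfold causal_state in Hs0. rewrite Hs0, comp_id_l. reflexivity.
    - rewrite disc_marg, Hg, comp_assoc. unfold causal_state in Hc. rewrite Hc, comp_id_l. reflexivity. }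
  rewrite Hu, Hs, Eu, tws_scale. reflexivity.
Qed.

Lemma associnv_nat (S : SMC) (A B C A' B' C' : S) (f : Hom A A') (g : Hom B B') (h : Hom C C') :
  comp (associnv A' B' C') (tenm f (tenm g h)) = comp (tenm (tenm f g) h) (associnv A B C).
Proof.
  rewrite <- (comp_id_r (comp (associnv A' B' C') _)).
  rewrite <- (assoc_inv2 A B C). ra. rewrite (comp_assoc (tenm f _)), <- assoc_nat.
  rewrite !comp_assoc, assoc_inv1, comp_id_l. reflexivity.
Qed.

Lemma marg_assoc (C : SMCDZ) (X A B E : C) (g : Hom X (ten (ten A B) E)) :
  marginal (comp (assoc A B E) g)
  = comp (runit A) (comp (tenm (idm A) (disc B)) (marginal g)).
Proof.
  unfold marginal. rewrite disc_ten.
  rewrite <- (comp_id_l (idm A)) at 1. rewrite tenm_comp. ra.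
  rewrite (comp_assoc (tenm (idm A) (tenm _ _))).
  rewrite <- assoc_nat. ra. rewrite (comp_assoc (tenm (idm A) (lunit I))), triangle.
  rewrite (comp_assoc (tenm (runit A) _)), <- tenm_comp, comp_id_l.
  rewrite split_ten.
  rewrite !comp_assoc, runit_nat. ra. reflexivity.
Qed.

Lemma marg_associnv (C : SMCDZ) (X A B E : C) (h : Hom X (ten A (ten B E))) :
  marginal (comp (associnv A B E) h)
  = comp (tenm (idm A) (marginal (idm (ten B E)))) h.
Proof.
  unfold marginal. rewrite comp_id_r.
  rewrite (comp_assoc (tenm _ _) (associnv _ _ _)).
  rewrite <- (tenm_id A B), <- associnv_nat. ra. rewrite (comp_assoc (runit _)), K1.
  ra. rewrite (comp_assoc (assoc _ _ _)), assoc_inv2, comp_id_l. rewrite !comp_assoc, <- tenm_comp, comp_id_l.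
  reflexivity.
Qed.

Lemma cancel_left_state (C : SMCDZ) (A B : C) (p : state A) (x y : state B) :
  causal_state p ->
  comp (tenm p x) (runitinv I) = comp (tenm p y) (runitinv I) -> x = y.
Proof.
  intros Hp H.
  assert (H2 : comp (lunit B) (comp (tenm (disc A) (idm B)) (comp (tenm p x) (runitinv I)))
             = comp (lunit B) (comp (tenm (disc A) (idm B)) (comp (tenm p y) (runitinv I))))
    by (rewrite H; reflexivity).
  revert H2. rewrite !(comp_assoc (tenm (disc A) _)), <- !tenm_comp, !comp_id_l.
  unfold causal_state in Hp. rewrite Hp. rewrite !comp_assoc, !lunit_nat.
  ra. rewrite K2, runit_inv2, !comp_id_r. auto.
Qed.

Lemma tri_inv (S : SMC) :
  comp (assoc (@I S) I I) (tenm (lunitinv I) (idm I)) = tenm (idm I) (runitinv I).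
Proof.
  assert (E : idm (ten (@I S) (ten I I)) = comp (tenm (idm I) (lunitinv I)) (tenm (idm I) (lunit I))).
  { rewrite <- tenm_comp, comp_id_l, lunit_inv1, tenm_id. reflexivity. }
  rewrite <- (comp_id_l (comp (assoc I I I) _)), E.
  ra. rewrite (comp_assoc (tenm _ (lunit I))), triangle.
  rewrite <- tenm_comp, comp_id_l, <- K2, lunit_inv2, tenm_id, comp_id_r, K2inv.
  reflexivity.
Qed.

Lemma causal_nz (C : SMCDZ) (A : C) (p : state A) :
  @idm C I <> zero I I -> causal_state p -> p <> zero I A.
Proof.
  intros H Hp E. apply H. unfold causal_state in Hp. rewrite <- Hp, E, zero_comp_l. reflexivity.
Qed.

Lemma part_Q (C : SMCDZ) (A B : C) (p : state A) (q : state B) :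
  @idm C I <> zero I I -> causal_state p -> causal_state q -> pure p -> pure q ->
  pure (state_ten p q).
Proof.
  intros Hnz Hp Hq Hpp Hpq. right. intros E g Hg.
  assert (Hm1 : marginal (comp (assoc A B E) g) = p).
  { rewrite marg_assoc, Hg. unfold state_ten. ra.
    rewrite (comp_assoc (tenm (idm A) (disc B))), <- tenm_comp, comp_id_l.
    unfold causal_state in Hq. rewrite Hq.
    rewrite comp_assoc, runit_nat. ra. rewrite K2inv, runit_inv2, comp_id_r. reflexivity. }
  destruct Hpp as [H0|Hpp]; [exfalso; exact (@causal_nz C A p Hnz Hp H0)|].
  destruct (Hpp _ _ Hm1) as [tau [Htau Hg']].
  assert (Eg : g = comp (associnv A B E) (tensor_with_state p tau)).
  { rewrite <- Hg', comp_assoc, assoc_inv1, comp_id_l. reflexivity. }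
  assert (Hm2 : marginal tau = q).
  { apply (@cancel_left_state C A B p _ _ Hp).
    transitivity (marginal g).
    - rewrite Eg, marg_associnv. unfold tensor_with_state, marginal. rewrite comp_id_r.
      ra. rewrite (comp_assoc (tenm _ _) (tenm p tau)), <- tenm_comp, comp_id_l.
      ra. reflexivity.
    - rewrite Hg. unfold state_ten. rewrite K2inv. reflexivity. }
  destruct Hpq as [H0|Hpq]; [exfalso; exact (@causal_nz C B q Hnz Hq H0)|].
  destruct (Hpq _ tau Hm2) as [rho [Hrho Htau']]. exists rho; split; auto.
  apply canc_assoc. rewrite Hg', Htau'. unfold tensor_with_state, state_ten.
  replace (tenm (comp (tenm p q) (lunitinv I)) rho)
    with (comp (tenm (tenm p q) rho) (tenm (lunitinv I) (idm I)))
    by (rewrite <- tenm_comp, comp_id_r; reflexivity).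
  replace (tenm p (comp (tenm q rho) (runitinv I)))
    with (comp (tenm p (tenm q rho)) (tenm (idm I) (runitinv I)))
    by (rewrite <- tenm_comp, comp_id_r; reflexivity).
  ra. rewrite (comp_assoc (assoc _ _ _)), assoc_nat. ra.
  rewrite (comp_assoc (assoc I I I)), tri_inv. reflexivity.
Qed.

Lemma ten_causal (C : SMCDZ) (A B : C) (p : state A) (q : state B) :
  causal_state p -> causal_state q -> causal_state (state_ten p q).
Proof.
  unfold causal_state, state_ten. intros H1 H2.
  rewrite comp_assoc, disc_ten. ra.
  rewrite (comp_assoc (tenm _ _) (tenm p q)), <- tenm_comp, H1, H2, tenm_id, comp_id_l,
    lunit_inv2. reflexivity.
Qed.

Theorem mainTheorem5 (C : SMCDZ) (Hnorm : normalisation C) :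
  (forall (A : C) (psi sigma : state A),
      psi <> zero I A -> pure psi -> is_normalisation psi sigma -> pure sigma)
  /\
  (forall (A B : C) (psi : state A) (phi : state B),
      pure psi -> pure phi -> pure (state_ten psi phi)).
Proof.
  split.
  - intros A psi sigma. apply part_i; auto.
  - intros A B psi phi Hp Hf.
    destruct (classic (@idm C I = zero I I)) as [Hz|Hnz].
    { left. apply zero_states; auto. }
    destruct (classic (psi = zero I A)) as [E|Epsi].
    { left. rewrite E. unfold state_ten. rewrite zero_ten_l, zero_comp_r. reflexivity. }
    destruct (classic (phi = zero I B)) as [E|Ephi].
    { left. rewrite E. unfold state_ten. rewrite zero_ten_r, zero_comp_r. reflexivity. }
    destruct (classic (state_ten psi phi = zero I (ten A B))) as [E|Ez].
    { left. exact E. }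
    destruct (Hnorm _ psi Epsi) as [s1 [Hc1 [[r1 Hr1] _]]].
    destruct (Hnorm _ phi Ephi) as [s2 [Hc2 [[r2 Hr2] _]]].
    assert (P1 : pure s1).
    { apply (@part_i C Hnorm A psi s1 Epsi Hp). split; eauto. }
    assert (P2 : pure s2).
    { apply (@part_i C Hnorm B phi s2 Ephi Hf). split; eauto. }
    rewrite scale_comp in Hr1, Hr2.
    assert (Et : state_ten psi phi
                 = comp (state_ten s1 s2) (comp (lunit I) (comp (tenm r1 r2) (lunitinv I)))).
    { unfold state_ten. rewrite Hr1, Hr2, tenm_comp. ra.
      rewrite (comp_assoc (lunitinv I) (lunit I)), lunit_inv1, comp_id_l. reflexivity. }
    rewrite Et in *. apply part_P; auto.
    + apply ten_causal; auto.
    + apply part_Q; auto.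
Qed.
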